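(* Let $V$ be a finite set, $E\subset V\times V$ a set of directed edges without self-loops such that every vertex has at most one outgoing edge, and let real weights $\omega_v$ ($v\in V$), $\omega_{vw}$ ($v\ne w\in V$) and $B$ satisfy: (i) $\omega_v>\omega_{vw}$ for $(v,w)\in E$; (ii) $\omega_{uv}>\omega_{vw}$ whenever $(u,v),(v,w)\in E$; (iii) $\omega_{vw}=B$ whenever $v\neq w$, $(v,w)\notin E$ and $(w,v)\notin E$; (iv) $\omega_{vw}=\omega_{wv}$ for all $v\ne w$; (v) $B>\max\{\max_{v}\omega_v,\max_{(v,w)\in E}\omega_{vw}\}$. Let $S=\operatorname{conv}\{e_v:v\in V\}\subset\mathbb{R}^V$ (standard basis vectors) and let $\ell:S\to\mathbb{R}$ satisfy $\ell(e_v)=\omega_v$ for $v\in V$, $\ell(\tfrac12(e_v+e_w))=\omega_{vw}$ for $v\ne w$, and $\ell$ affine on each corner $S_v^{1/2}$, $v\in V$. Consider the conditional gradient iteration $$d_k=\operatorname{argmin}_{y\in S}\{\partial_{y-x_k}\ell(x_k)\}-x_k,\qquad x_{k+1}=x_k+\alpha_kd_k,$$ with either constant step $\alpha_k=1$, or exact line search $\alpha_k\in\operatorname{argmin}\{\ell(x_k+\alpha d_k):\alpha\ge0,\ x_k+\alpha d_k\in S\}$. Let $v_0,\dots,v_K\in V$ with $(v_k,v_{k+1})\in E$ for $k<K$ and $v_K$ without outgoing edge, and let $x_0=e_{v_0}$. (a) If $\alpha_k=1$ for all $k$, then the minimizers defining $d_k$ are unique for $k<K$ and $x_k=e_{v_k}$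 for $k=0,\dots,K$. (b) If in addition $\omega_v>\omega_{vw}>\omega_w$ for all $(v,w)\in E$, then for either choice of step size (constant $1$ or exact line search) we have $x_k=e_{v_k}$ for $k\le K$, $x_k=e_{v_K}$ for all $k>K$, and $\ell(x_k)=\omega_{v_k}$ with $\omega_{v_0}>\omega_{v_1}>\cdots>\omega_{v_K}$.
   Context: For $v\ne w$ and $0<\mu\le 1$, $e^\mu_{vw}=(1-\mu)e_v+\mu e_w$, and the corner $S_v^\mu=\operatorname{conv}(\{e_v\}\cup\{e^\mu_{vw}:w\ne v\})$. $\partial_{y-x}\ell(x)=\lim_{h\to0,h\ge 0}\frac1h[\ell(x+h(y-x))-\ell(x)]$ is the one-sided directional derivative. (The graph models the execution of a deterministic Turing machine: vertices are machine configurations, edges are computation steps, vertices without outgoing edge are halting configurations.) *)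

(* Defs.v *)
From mathcomp Require Import all_boot all_order all_algebra.
From mathcomp Require Import all_classical all_reals topology normedtype.
Set Implicit Arguments. Unset Strict Implicit. Unset Printing Implicit Defensive.
Import Order.TTheory GRing.Theory Num.Theory numFieldNormedType.Exports.
Local Open Scope ring_scope.
Local Open Scope classical_set_scope.

Definition basisv (R : nzRingType) (V : finType) (v : V) : V -> R :=
  fun u => if u == v then 1 else 0.

Definition emu (R : nzRingType) (V : finType) (mu : R) (v w : V) : V -> R :=
  fun u => (1 - mu) * basisv R v u + mu * basisv R w u.

Definition inconv (R : realType) (V I : finType) (p : I -> V -> R) (x : V -> R) : Prop :=
  exists lam : I -> R, (forall i, 0 <= lam i) /\ \sum_i lam i = 1 /\
    forall u, x u = \sum_i lam i * p i u.

Definition simplexS (R : realType) (V : finType) (x : V -> R) : Prop :=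
  inconv (fun v : V => basisv R v) x.

(* the corner S_v^mu = conv ({e_v} u {e^mu_{vw} : w <> v}) (index w = v gives e_v) *)
Definition corner (R : realType) (V : finType) (mu : R) (v : V) (x : V -> R) : Prop :=
  inconv (fun w : V => if w == v then basisv R v else emu mu v w) x.

Definition affine_on (R : realType) (V : finType) (C : (V -> R) -> Prop)
  (l : (V -> R) -> R) : Prop :=
  forall x y t, C x -> C y -> 0 <= t <= 1 ->
    l (fun u => t * x u + (1 - t) * y u) = t * l x + (1 - t) * l y.

Definition dirderiv (R : realType) (V : finType) (l : (V -> R) -> R)
  (x d : V -> R) (L : R) : Prop :=
  (fun h : R => h^-1 * (l (fun u => x u + h * d u) - l x)) @ 0^'+ --> L.

Definition argminDir (R : realType) (V : finType) (l : (V -> R) -> R)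
  (x y : V -> R) : Prop :=
  simplexS y /\ exists L, dirderiv l x (fun u => y u - x u) L /\
    forall y', simplexS y' -> exists L', dirderiv l x (fun u => y' u - x u) L' /\ L <= L'.

Definition CGstep (R : realType) (V : finType) (l : (V -> R) -> R)
  (x y : V -> R) (a : R) (x' : V -> R) : Prop :=
  argminDir l x y /\ x' = (fun u => x u + a * (y u - x u)).

Definition linesearch (R : realType) (V : finType) (l : (V -> R) -> R)
  (x d : V -> R) (a : R) : Prop :=
  0 <= a /\ simplexS (fun u => x u + a * d u) /\
  forall a', 0 <= a' -> simplexS (fun u => x u + a' * d u) ->
    l (fun u => x u + a * d u) <= l (fun u => x u + a' * d u).

(* Main.v *)
Require Import Defs.
From mathcomp Require Import all_boot all_order all_algebra.
From mathcomp Require Import all_classical all_reals topology normedtype.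
From mathcomp Require Import ring lra.
Import Order.TTheory GRing.Theory Num.Theory numFieldNormedType.Exports.
Local Open Scope ring_scope.
Local Open Scope classical_set_scope.
Set Implicit Arguments. Unset Strict Implicit.

Lemma dd_unique (R : realType) (V : finType) (l : (V -> R) -> R) x d L1 L2 :
  dirderiv l x d L1 -> dirderiv l x d L2 -> L1 = L2.
Proof. move=> h1 h2; exact: (cvg_unique _ h1 h2). Qed.

Lemma cvg_eventually_const (R : realType) (g : R -> R) (c L : R) :
  0 < c -> (forall h, 0 < h -> h <= c -> g h = L) -> g @ 0^'+ --> L.
Proof.
move=> c0 H.
apply: cvg_trans (near_eq_cvg _) (cvg_cst L).
near=> h.
apply/esym; apply: H; [near: h; exact: nbhs_right_gt | near: h; exact: nbhs_right_le].
Unshelve. all: by end_near.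
Qed.

Lemma sum_basis (R : realType) (V : finType) (f : V -> R) u :
  \sum_i f i * basisv R i u = f u.
Proof.
rewrite (bigD1 u) //= /basisv eqxx mulr1 big1 ?addr0 // => i /negbTE.
by rewrite eq_sym => ->; rewrite mulr0.
Qed.

Lemma basisvC (R : realType) (V : finType) (v u : V) : basisv R v u = basisv R u v.
Proof. by rewrite /basisv eq_sym. Qed.

Lemma sum_basisL (R : realType) (V : finType) (f : V -> R) w :
  \sum_u basisv R w u * f u = f w.
Proof.
rewrite -[RHS](sum_basis f); apply: eq_bigr => u _; by rewrite mulrC basisvC.
Qed.

Lemma sum_basis1 (R : realType) (V : finType) (w : V) : \sum_i basisv R w i = 1.
Proof. rewrite -[RHS](sum_basisL (fun _ => 1) w); apply: eq_bigr => u _; by rewrite mulr1. Qed.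

Lemma simplex_coord (R : realType) (V : finType) (y : V -> R) :
  simplexS y -> (forall u, 0 <= y u) /\ \sum_u y u = 1.
Proof.
case=> lam [h0 [h1 h2]].
have ->: y = lam by apply: funext => u; rewrite h2 sum_basis.
by [].
Qed.

Lemma simplex_basis (R : realType) (V : finType) (w : V) : simplexS (basisv R w).
Proof.
exists (basisv R w); split; first by move=> i; rewrite /basisv; case: eqP.
by split; [exact: sum_basis1 | move=> u; rewrite sum_basis].
Qed.

Lemma affine_multi (R : realType) (V I : finType) (p : I -> V -> R) l :
  affine_on (inconv p) l -> forall lam, (forall i, 0 <= lam i) -> \sum_i lam i = 1 ->
  l (fun t => \sum_i lam i * p i t) = \sum_i lam i * l (p i).
Proof.
move=> Haff.
suff H: forall n (A : {set I}) lam, #|A| = n -> (forall i, i \notin A -> lam i = 0) ->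
   (forall i, 0 <= lam i) -> \sum_i lam i = 1 ->
   l (fun t => \sum_i lam i * p i t) = \sum_i lam i * l (p i).
  move=> lam h0 h1.
  have hs : forall i, i \notin [set: I]%SET -> lam i = 0 by move=> i; rewrite finset.in_setT.
  exact: (H _ [set: I]%SET lam erefl hs h0 h1).
elim=> [|n IH] A lam hA hsupp h0 h1.
  have: \sum_i lam i = 0.
    by apply: big1 => i _; apply: hsupp; move/eqP: hA; rewrite cards_eq0 => /eqP ->; rewrite finset.in_set0.
  by rewrite h1 => /eqP; rewrite oner_eq0.
have [a aA]: exists a, a \in A by apply/set0Pn; rewrite -card_gt0 hA.
have hs: \sum_i lam i = lam a + \sum_(i | i != a) lam i by rewrite (bigD1 a).
have rge: 0 <= \sum_(i | i != a) lam i by apply: sumr_ge0.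
case: (lam a =P 1) => [la1|la1].
  have hz: forall i, i != a -> lam i = 0.
    apply/psumr_eq0P => //; lra.
  have ->: (fun t => \sum_i lam i * p i t) = p a.
    apply: funext => t; rewrite (bigD1 a) //= la1 mul1r big1 ?addr0 // => i ia.
    by rewrite hz // mul0r.
  rewrite (bigD1 a) //= la1 mul1r big1 ?addr0 // => i ia.
  by rewrite hz // mul0r.
have s0 : 0 < 1 - lam a.
  have : lam a <= 1 by lra.
  rewrite le_eqVlt => /orP [/eqP //|]; rewrite subr_gt0 //.
have sn0 : 1 - lam a != 0 by rewrite gt_eqF.
pose mu i := if i == a then 0 else lam i / (1 - lam a).
have mu0 : forall i, 0 <= mu i.
  by move=> i; rewrite /mu; case: eqP => // _; rewrite divr_ge0 // ltW.
have mu1 : \sum_i mu i = 1.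
  rewrite (bigD1 a) //= /mu eqxx add0r.
  have ->: \sum_(i | i != a) (if i == a then 0 else lam i / (1 - lam a))
         = (\sum_(i | i != a) lam i) / (1 - lam a).
    by rewrite mulr_suml; apply: eq_bigr => i /negbTE ->.
  have -> : \sum_(i | i != a) lam i = 1 - lam a by lra.
  by rewrite divff.
have Hq : l (fun t => \sum_i mu i * p i t) = \sum_i mu i * l (p i).
  apply: (IH (A :\ a)) => //.
    by move: hA; rewrite (cardsD1 a) aA add1n => -[].
  move=> i; rewrite in_setD1 negb_and negbK => /orP [/eqP ->|iA].
    by rewrite /mu eqxx.
  by rewrite /mu; case: eqP => // _; rewrite hsupp // mul0r.
have pt : (fun t => \sum_i lam i * p i t) =
          (fun t => lam a * p a t + (1 - lam a) * (\sum_i mu i * p i t)).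
  apply: funext => t; rewrite (bigD1 a) //= (bigD1 a (P := xpredT)) //= /mu eqxx mul0r add0r mulr_sumr.
  congr (_ + _); apply: eq_bigr => i /negbTE ->; field => //.
rewrite pt Haff //.
- rewrite Hq (bigD1 a) //= (bigD1 a (P := xpredT)) //= /mu eqxx mul0r add0r mulr_sumr.
  congr (_ + _); apply: eq_bigr => i /negbTE ->; field => //.
- exists (fun i => if i == a then 1 else 0); split; first by move=> i; case: eqP.
  split; first by rewrite (bigD1 a) //= eqxx big1 ?addr0 // => i /negbTE ->.
  move=> u; rewrite (bigD1 a) //= eqxx mul1r big1 ?addr0 // => i /negbTE ->; by rewrite mul0r.
- by exists mu.
- by rewrite h0 /=; lra.
Qed.

Lemma emu_half_vv (R : realType) (V : finType) (v : V) : emu (2^-1 : R) v v = basisv R v.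
Proof. by apply: funext => t; rewrite /emu -mulrDl subrK mul1r. Qed.

Lemma emu_half (R : realType) (V : finType) (v u : V) :
  emu (2^-1 : R) v u = (fun t => 2^-1 * (basisv R v t + basisv R u t)).
Proof. apply: funext => t; by rewrite /emu; field. Qed.

Lemma corner_half (R : realType) (V : finType) (v : V) :
  corner (2^-1 : R) v = inconv (fun w => emu 2^-1 v w).
Proof.
rewrite /corner.
suff ->: (fun w => if w == v then basisv R v else emu 2^-1 v w) = (fun w => emu (2^-1 : R) v w) by [].
apply: funext => w; case: (w =P v) => [->|//].
by rewrite emu_half_vv.
Qed.

Lemma strict_min (R : realType) (V : finType) (c : V -> R) w (y : V -> R) :
  (forall u, u != w -> c w < c u) -> (forall u, 0 <= y u) -> \sum_u y u = 1 ->
  \sum_u y u * c u <= c w -> y = basisv R w.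
Proof.
move=> Hc y0 y1 hle.
have ge: forall u, 0 <= y u * (c u - c w).
  move=> u; apply: mulr_ge0 => //; case: (u =P w) => [->|/eqP uw]; first by rewrite subrr.
  by rewrite subr_ge0 ltW // Hc.
have H0: \sum_u y u * (c u - c w) = 0.
  apply/eqP; rewrite eq_le; apply/andP; split; last by apply: sumr_ge0.
  under eq_bigr do rewrite mulrBr.
  by rewrite sumrB -mulr_suml y1 mul1r subr_le0.
have z: forall u, u != w -> y u = 0.
  move=> u uw; have /eqP := (psumr_eq0P (P := xpredT) (fun i _ => ge i) H0 (i:=u) isT).
  rewrite mulf_eq0 => /orP [/eqP //|]; rewrite subr_eq0 => /eqP e.
  by have := Hc u uw; rewrite e ltxx.
have yw: y w = 1.
  by move: y1; rewrite (bigD1 w) //= big1 ?addr0 // => i iw; rewrite z.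
apply: funext => u; rewrite /basisv; case: eqP => [->//|/eqP]; exact: z.
Qed.

Lemma line_val (R : realType) (V : finType) (l : (V -> R) -> R) (w1v : R) (c : V -> R)
  (v : V) (y : V -> R) (h : R) :
  affine_on (inconv (fun u => emu 2^-1 v u)) l -> (forall u, l (emu 2^-1 v u) = c u) ->
  c v = w1v -> simplexS y -> 0 <= h -> h <= 2^-1 ->
  l (fun t => basisv R v t + h * (y t - basisv R v t)) =
    w1v + h * (2 * (\sum_u y u * c u - w1v)).
Proof.
move=> Haff Hc Hcv Sy h0 h1; case: (simplex_coord Sy) => y0 y1.
have h2 : 2 * h <= 1 by lra.
pose mu u := basisv R v u + 2 * h * (y u - basisv R v u).
have mu0 : forall u, 0 <= mu u.
  move=> u; rewrite /mu /basisv; case: eqP => _; have := y0 u; nra.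
have mu1 : \sum_u mu u = 1.
  rewrite big_split /= -mulr_sumr sumrB y1 sum_basis1 subrr mulr0 addr0 //.
have pt : (fun t => basisv R v t + h * (y t - basisv R v t)) =
          (fun t => \sum_u mu u * emu 2^-1 v u t).
  apply: funext => t; rewrite /emu.
  under eq_bigr do rewrite mulrDr.
  rewrite big_split /= -mulr_suml mu1.
  under eq_bigr do rewrite mulrCA.
  rewrite -mulr_sumr sum_basis /mu; by field.
rewrite pt affine_multi //.
under eq_bigr do rewrite Hc mulrDl.
rewrite big_split /= sum_basisL Hcv.
have ->: \sum_u 2 * h * (y u - basisv R v u) * c u =
         2 * h * (\sum_u y u * c u - \sum_u basisv R v u * c u).
  by rewrite -sumrB mulr_sumr; apply: eq_bigr => u _; ring.
rewrite sum_basisL Hcv; ring.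
Qed.

Lemma argmin_vertex (R : realType) (V : finType) (l : (V -> R) -> R) (w1v : R) (c : V -> R)
  (v w : V) (y : V -> R) :
  affine_on (inconv (fun u => emu 2^-1 v u)) l -> (forall u, l (emu 2^-1 v u) = c u) ->
  c v = w1v -> (forall u, u != w -> c w < c u) ->
  argminDir l (basisv R v) y -> y = basisv R w.
Proof.
move=> Haff Hc Hcv Hmin [Sy [L [HL Hall]]].
case: (Hall (basisv R w) (simplex_basis _ w)) => L' [HL' LL'].
have lv : l (basisv R v) = w1v by rewrite -emu_half_vv Hc Hcv.
have D: forall y', simplexS y' -> dirderiv l (basisv R v) (fun u => y' u - basisv R v u)
          (2 * (\sum_u y' u * c u - w1v)).
  move=> y' Sy'; rewrite /dirderiv.
  apply: (@cvg_eventually_const _ _ 2^-1); first by rewrite invr_gt0.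
  move=> h hp hc.
  rewrite (line_val Haff Hc Hcv Sy' (ltW hp) hc) lv addrAC subrr add0r mulKf //.
  by rewrite gt_eqF.
have eL := dd_unique HL (D y Sy).
have eL' := dd_unique HL' (D _ (simplex_basis _ w)).
case: (simplex_coord Sy) => y0 y1.
apply: (strict_min Hmin y0 y1).
move: LL'; rewrite eL eL' sum_basisL; lra.
Qed.

Lemma ineq1 (R : realType) (a p q r : R) : 0 <= a -> a <= 2^-1 -> q < p -> r < q ->
  p + a * (2 * (q - p)) <= r -> False.
Proof. move=> *; nra. Qed.

Lemma ineq2 (R : realType) (a q r : R) : a < 1 -> r < q ->
  r + (1 - a) * (2 * (q - r)) <= r -> False.
Proof. move=> *; nra. Qed.

Unset Implicit Arguments. Set Strict Implicit.
Local Close Scope classical_set_scope.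

Theorem mainTheorem2 (R : realType) (V : finType) (E : rel V)
  (w1 : V -> R) (w2 : V -> V -> R) (B : R) (l : (V -> R) -> R)
  (K : nat) (vs : nat -> V) :
  (* no self loops, at most one outgoing edge *)
  (forall v, ~~ E v v) ->
  (forall v w w', E v w -> E v w' -> w = w') ->
  (* (i) - (v) *)
  (forall v w, E v w -> w2 v w < w1 v) ->
  (forall u v w, E u v -> E v w -> w2 v w < w2 u v) ->
  (forall v w, v != w -> ~~ E v w -> ~~ E w v -> w2 v w = B) ->
  (forall v w, v != w -> w2 v w = w2 w v) ->
  (forall v, w1 v < B) -> (forall v w, E v w -> w2 v w < B) ->
  (* the function l *)
  (forall v, l (basisv R v) = w1 v) ->
  (forall v w, v != w -> l (fun u => 2^-1 * (basisv R v u + basisv R w u)) = w2 v w) ->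
  (forall v, affine_on (corner 2^-1 v) l) ->
  (* the path *)
  (forall k, (k < K)%N -> E (vs k) (vs k.+1)) ->
  (forall w, ~~ E (vs K) w) ->
  (* (a) constant step 1 *)
  (forall (x y : nat -> V -> R),
     x 0%N = basisv R (vs 0%N) ->
     (forall k, (k < K)%N -> CGstep l (x k) (y k) 1 (x k.+1)) ->
     (forall k, (k < K)%N -> forall y1 y2,
        argminDir l (x k) y1 -> argminDir l (x k) y2 -> y1 = y2) /\
     (forall k, (k <= K)%N -> x k = basisv R (vs k)))
  /\
  (* (b) *)
  ((forall v w, E v w -> w1 v > w2 v w /\ w2 v w > w1 w) ->
   forall (x y : nat -> V -> R) (a : nat -> R),
     x 0%N = basisv R (vs 0%N) ->
     (forall k, CGstep l (x k) (y k) (a k) (x k.+1)) ->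
     ((forall k, a k = 1) \/
      (forall k, linesearch l (x k) (fun u => y k u - x k u) (a k))) ->
     (forall k, (k <= K)%N -> x k = basisv R (vs k)) /\
     (forall k, (K < k)%N -> x k = basisv R (vs K)) /\
     (forall k, l (x k) = w1 (vs (minn k K))) /\
     (forall k, (k < K)%N -> w1 (vs k) > w1 (vs k.+1))).
Proof.
move=> noloop funcE hi hii hiii hiv hB1 hB2 lv lm laff path term.
have Haff: forall v, affine_on (inconv (fun u => emu 2^-1 v u)) l.
  by move=> v; rewrite -corner_half; exact: laff.
pose c := fun v u => if u == v then w1 v else w2 v u.
have Hc: forall v u, l (emu 2^-1 v u) = c v u.
  move=> v u; rewrite /c; case: (u =P v) => [->|/eqP uv].
    by rewrite emu_half_vv lv.
  by rewrite emu_half lm // eq_sym.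
have Hcv: forall v, c v v = w1 v by move=> v; rewrite /c eqxx.
have key: forall v w y, (forall u, u != w -> c v w < c v u) ->
    argminDir l (basisv R v) y -> y = basisv R w.
  move=> v w y H; exact: (argmin_vertex (Haff v) (Hc v) (Hcv v) H).
have neqE: forall v w, E v w -> v != w.
  by move=> v w e; apply/eqP => vw; move: e; rewrite vw; move/negP: (noloop w).
have cvw: forall v w, E v w -> c v w = w2 v w.
  by move=> v w e; rewrite /c eq_sym (negbTE (neqE _ _ e)).
have step: forall k, (k < K)%N -> forall y, argminDir l (basisv R (vs k)) y ->
    y = basisv R (vs k.+1).
  move=> k kK y; apply: key => u uw.
  have e := path k kK; rewrite cvw //.
  rewrite /c; case: (u =P vs k) => [_|/eqP uv]; first exact: hi.
  case evu: (E (vs k) u).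
    by move: uw; rewrite (funcE _ _ _ evu e) eqxx.
  case euv: (E u (vs k)).
    rewrite (hiv (vs k) u); last by rewrite eq_sym.
    exact: hii euv e.
  rewrite (hiii (vs k) u) ?evu ?euv //; first exact: hB2 e.
  by rewrite eq_sym.
have hxa: forall (x y : nat -> V -> R), x 0%N = basisv R (vs 0%N) ->
     (forall k, (k < K)%N -> CGstep l (x k) (y k) 1 (x k.+1)) ->
     (forall k, (k <= K)%N -> x k = basisv R (vs k)).
  move=> x y x0 hstep; elim=> [//|k IH] hk.
  case: (hstep k hk) => hy ->.
  have IH' := IH (ltnW hk).
  rewrite IH' in hy *.
  rewrite (step k hk _ hy); apply: funext => u; ring.
split.
  move=> x y x0 hstep; split; last exact: hxa x0 hstep.
  move=> k kK y1 y2; rewrite (hxa _ _ x0 hstep k (ltnW kK)) => h1 h2.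
  by rewrite (step k kK _ h1) (step k kK _ h2).
move=> hb x y a x0 hstep ha.
have termstep: forall y, argminDir l (basisv R (vs K)) y -> y = basisv R (vs K).
  move=> y0; apply: key => u uv.
  rewrite Hcv /c (negbTE uv).
  case evu: (E (vs K) u); first by move: (term u); rewrite evu.
  case euv: (E u (vs K)).
    rewrite (hiv (vs K) u); last by rewrite eq_sym.
    by case: (hb _ _ euv).
  rewrite (hiii (vs K) u) ?evu ?euv //; by rewrite eq_sym.
have lsK: forall k, (k < K)%N -> forall a0,
    linesearch l (basisv R (vs k)) (fun u => basisv R (vs k.+1) u - basisv R (vs k) u) a0 ->
    a0 = 1.
  move=> k kK a0 [a_ge0 [Sa Hmin]].
  have e := path k kK.
  set v := vs k in e Sa Hmin *; set w := vs k.+1 in e Sa Hmin *.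
  have [hb1 hb2] := hb _ _ e.
  have vw := neqE _ _ e.
  have pw : (fun u => basisv R v u + 1 * (basisv R w u - basisv R v u)) = basisv R w.
    by apply: funext => u; ring.
  have := Hmin 1 ler01; rewrite pw lv => /(_ (simplex_basis _ _)) hle.
  have a_le1 : a0 <= 1.
    case: (simplex_coord Sa) => /(_ v) + _.
    by rewrite /basisv eqxx (negbTE vw); lra.
  case: (a0 =P 1) => // /eqP a1.
  have a_lt1 : a0 < 1 by rewrite lt_neqAle a1.
  exfalso.
  case: (lerP a0 2^-1) => ha2.
    move: hle; rewrite (line_val (Haff v) (Hc v) (Hcv v) (simplex_basis _ w) a_ge0 ha2).
    rewrite sum_basisL cvw //.
    exact: ineq1 a_ge0 ha2 hb1 hb2.
  have pw' : (fun u => basisv R v u + a0 * (basisv R w u - basisv R v u)) =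
             (fun u => basisv R w u + (1 - a0) * (basisv R v u - basisv R w u)).
    by apply: funext => u; ring.
  have h0 : 0 <= 1 - a0 by lra.
  have h1 : 1 - a0 <= 2^-1 by lra.
  move: hle; rewrite pw' (line_val (Haff w) (Hc w) (Hcv w) (simplex_basis _ v) h0 h1).
  rewrite sum_basisL /c (negbTE vw) -(hiv v w vw).
  exact: ineq2 a_lt1 hb2.
have hx: forall k, x k = basisv R (vs (minn k K)).
  elim=> [|k IH]; first by rewrite x0 min0n.
  case: (hstep k) => hy ->.
  rewrite IH in hy *.
  case: (ltnP k K) => kK.
    have mk : minn k K = k by apply/minn_idPl; exact: ltnW.
    have mk1 : minn k.+1 K = k.+1 by apply/minn_idPl.
    rewrite mk in hy *; rewrite mk1.
    have yk := step k kK _ hy.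
    have ak : a k = 1.
      case: ha => [h|h]; first exact: h.
      apply: (lsK k kK); have := h k; rewrite IH mk yk; exact.
    by rewrite yk ak; apply: funext => u; ring.
  have mk : minn k K = K by apply/minn_idPr.
  have mk1 : minn k.+1 K = K by apply/minn_idPr; exact: leqW.
  rewrite mk in hy *; rewrite mk1 (termstep _ hy).
  by apply: funext => u; rewrite subrr mulr0 addr0.
split.
  by move=> k kK; rewrite hx; congr (basisv R (vs _)); apply/minn_idPl.
split.
  by move=> k kK; rewrite hx; congr (basisv R (vs _)); apply/minn_idPr; exact: ltnW.
split.
  by move=> k; rewrite hx lv.
move=> k kK; have [h1 h2] := hb _ _ (path k kK); exact: lt_trans h2 h1.
Qed.
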